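(* Let $G$ be a finite non-abelian group satisfying condition (Con). Then the clique number of $\mathcal C_G$ is $\omega(\mathcal C_G)=\max_{u\in G\setminus Z(G)}|C(u)|$. Moreover, with $C(G)=\{v\in G: d(v)-|Z(G)|>0\}$ where $d(v)=|C(v)|-1$ is the degree of $v$ in $\mathcal C_G$: (i) if $C(G)\supsetneq Z(G)$, then $\omega(\mathcal C_G)$ equals the largest eigenvalue of the Laplacian matrix of $\mathcal C_G$ that is strictly smaller than $|G|$ (the second largest distinct eigenvalue); (ii) if $C(G)=Z(G)$, then $\omega(\mathcal C_G)=|Z(G)|+1$.
   Context: For a finite group $G$, the commuting graph $\mathcal C_G$ is the simple undirected graph with vertex set $G$ in which distinct $u,v\in G$ are adjacent iff $uv=vu$. The Laplacian matrix of a simple graph is $L=D-A$ ($A$ adjacency matrix, $D$ diagonal degree matrix). $Z(G)$ is the center of $G$ and $C(v)=\{w\in G: wv=vw\}$ the centralizer of $v$. Condition (Con): for all $u,v\in G\setminus Z(G)$, either $C(u)=C(v)$ or $C(u)\cap C(v)=Z(G)$. The clique number is the maximum size of a set of pairwise adjacent vertices. *)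

(* Defs.v *)
From HB Require Import structures.
From mathcomp Require Import all_boot all_order all_algebra all_fingroup all_solvable all_field all_character.
Set Implicit Arguments. Unset Strict Implicit. Unset Printing Implicit Defensive.
Import Order.TTheory GRing.Theory Num.Theory.
Local Open Scope group_scope.

(* Commuting graph C_G of a finite group G : {group gT}: vertex set G,
   distinct u v adjacent iff u * v = v * u. *)

Definition Con (gT : finGroupType) (G : {group gT}) : Prop :=
  forall u v, u \in G :\: 'Z(G) -> v \in G :\: 'Z(G) ->
    'C_G[u] = 'C_G[v] \/ 'C_G[u] :&: 'C_G[v] = 'Z(G).

Definition is_clique (gT : finGroupType) (G : {group gT}) (S : {set gT}) : bool :=
  (S \subset G) && [forall x in S, forall y in S, (x != y) ==> ((x * y)%g == (y * x)%g)].

Definition clique_number (gT : finGroupType) (G : {group gT}) : nat :=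
  \max_(S : {set gT} | is_clique G S) #|S|.

Definition cdeg (gT : finGroupType) (G : {group gT}) (v : gT) : nat :=
  #|'C_G[v]| - 1.

Definition CGset (gT : finGroupType) (G : {group gT}) : {set gT} :=
  [set v in G | #|'Z(G)| < cdeg G v].

(* Laplacian matrix L = D - A of C_G, vertices of G enumerated via enum_val,
   with complex (algebraic) entries so that all eigenvalues exist. *)
Definition laplacian (gT : finGroupType) (G : {group gT}) : 'M[algC]_#|G| :=
  \matrix_(i < #|G|, j < #|G|)
    let x := enum_val i in let y := enum_val j in
    (if i == j then (cdeg G x)%:R
    else if (x * y == y * x)%g then -1 else 0)%R.

(* Main.v *)
Require Import Defs.
From HB Require Import structures.
From mathcomp Require Import all_boot all_order all_algebra all_fingroup all_solvable all_field all_character.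
From mathcomp Require Import ring zify.
Import Order.TTheory GRing.Theory Num.Theory.
Set Implicit Arguments. Unset Strict Implicit. Unset Printing Implicit Defensive.
Local Open Scope group_scope.

Section Aux.
Variables (gT : finGroupType) (G : {group gT}).

Lemma inCG x y : (x \in 'C_G[y]) = (x \in G) && (x * y == y * x).
Proof. by rewrite inE cent1E. Qed.

Lemma inZc x y : x \in 'Z(G) -> y \in G -> x * y = y * x.
Proof. by case/centerP=> _ H /H. Qed.

Lemma Z_sub_CG u : u \in G -> 'Z(G) \subset 'C_G[u].
Proof.
move=> Gu; apply/subsetP=> x Zx; rewrite inCG (subsetP (center_sub G) x Zx) /=.
by rewrite (inZc Zx Gu).
Qed.

Lemma CG_self u : u \in G -> u \in 'C_G[u].
Proof. by move=> Gu; rewrite inCG Gu eqxx. Qed.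

Lemma CG_sub u : 'C_G[u] \subset G.
Proof. exact: subsetIl. Qed.

Lemma CG_key u v : Con G -> u \in G :\: 'Z(G) -> v \in 'C_G[u] -> v \notin 'Z(G) ->
  'C_G[v] = 'C_G[u].
Proof.
move=> hC Hu Hv nZv.
have Gu : u \in G by case/setDP: Hu.
have nZu : u \notin 'Z(G) by case/setDP: Hu.
move: Hv; rewrite inCG => /andP[Gv /eqP cvu].
have Hv' : v \in G :\: 'Z(G) by rewrite inE nZv Gv.
case: (hC v u Hv' Hu) => // HI.
have : u \in 'C_G[v] :&: 'C_G[u] by rewrite inE CG_self // inCG Gu cvu eqxx.
by rewrite HI (negPf nZu).
Qed.

Lemma CG_proper u : u \in G :\: 'Z(G) -> 'C_G[u] \proper G.
Proof.
case/setDP=> Gu nZu; apply/properP; split; first exact: CG_sub.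
case: (boolP [forall x in G, x * u == u * x]) => [/forallP Hall|].
  case/negP: nZu; apply/centerP; split=> // x Gx.
  by move: (Hall x); rewrite Gx /= => /eqP.
rewrite negb_forall => /existsP[x]; rewrite negb_imply => /andP[Gx nc].
by exists x => //; rewrite inCG Gx.
Qed.

Lemma CG_clique u : Con G -> u \in G :\: 'Z(G) -> is_clique G 'C_G[u].
Proof.
move=> hC Hu; have Gu : u \in G by case/setDP: Hu.
rewrite /is_clique CG_sub /=; apply/forallP=> x; apply/implyP=> Cx.
apply/forallP=> y; apply/implyP=> Cy; apply/implyP=> _.
have Gx : x \in G by move: Cx; rewrite inCG => /andP[].
have Gy : y \in G by move: Cy; rewrite inCG => /andP[].
case: (boolP (x \in 'Z(G))) => [Zx|nZx]; first by rewrite (inZc Zx Gy).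
have := CG_key hC Hu Cx nZx; move=> E.
by move: Cy; rewrite -E inCG => /andP[_ /eqP ->].
Qed.

Lemma noncentral_ex : ~~ abelian G -> exists u, u \in G :\: 'Z(G).
Proof.
move=> nab; case: (set_0Vmem (G :\: 'Z(G))) => [E|[u Hu]]; last by exists u.
case/negP: nab; apply: (abelianS _ (center_abelian G)).
by rewrite -setD_eq0 E.
Qed.

Lemma clique_eq : ~~ abelian G -> Con G ->
  clique_number G = \max_(u in G :\: 'Z(G)) #|'C_G[u]|.
Proof.
move=> nab hC; have [u0 Hu0] := noncentral_ex nab.
have Gu0 : u0 \in G by case/setDP: Hu0.
apply/eqP; rewrite eqn_leq; apply/andP; split.
  apply/bigmax_leqP => S /andP[SG Hcl].
  case: (boolP (S \subset 'Z(G))) => [SZ|].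
    apply: (leq_trans (subset_leq_card SZ)).
    apply: (leq_trans (subset_leq_card (Z_sub_CG Gu0))).
    exact: (leq_bigmax_cond u0 Hu0).
  case/subsetPn => u Su nZu.
  have Gu : u \in G by apply: (subsetP SG).
  have Hu : u \in G :\: 'Z(G) by rewrite inE nZu Gu.
  apply: (leq_trans _ (leq_bigmax_cond u Hu)); apply: subset_leq_card.
  apply/subsetP => x Sx; rewrite inCG (subsetP SG x Sx) /=.
  case: (eqVneq x u) => [->//|nxu].
  by move/forallP: Hcl => /(_ x); rewrite Sx /= => /forallP /(_ u); rewrite Su nxu.
apply/bigmax_leqP => u Hu.
exact: (leq_bigmax_cond _ (CG_clique hC Hu)).
Qed.

End Aux.

Section Spec.
Variables (gT : finGroupType) (G : {group gT}).
Hypothesis hC : Con G.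
Local Open Scope ring_scope.

Lemma CG_center h : h \in 'Z(G) -> 'C_G[h] = G.
Proof.
move=> Zh; apply/setP=> x; rewrite inCG; case: (boolP (x \in G)) => //= Gx.
by rewrite (inZc Zh Gx) eqxx.
Qed.

Lemma spec_zero (f : gT -> algC) (e : algC) :
  (forall h, h \in G -> e * f h = #|'C_G[h]|%:R * f h - \sum_(g in 'C_G[h]) f g) ->
  e != 0 -> e != #|'Z(G)|%:R -> e != #|G|%:R ->
  (forall h, h \in G :\: 'Z(G) -> e != #|'C_G[h]|%:R) ->
  forall h, h \in G -> f h = 0.
Proof.
move=> Heq e0 ez en ec.
set T := \sum_(g in G) f g; set Q := \sum_(g in 'Z(G)) f g.
set n : algC := #|G|%:R; set z : algC := #|'Z(G)|%:R.
have HZ : forall h, h \in 'Z(G) -> (n - e) * f h = T.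
  move=> h Zh; have Gh : h \in G by apply: (subsetP (center_sub G)).
  by have := Heq h Gh; rewrite CG_center // => E; rewrite mulrBl E /T /n; ring.
have HN : forall h, h \in G :\: 'Z(G) -> (z - e) * f h = Q.
  move=> h Hh; have Gh : h \in G by case/setDP: Hh.
  set C := 'C_G[h]; set c : algC := #|C|%:R; set S := \sum_(g in C) f g.
  have Hk : forall k, k \in C :\: 'Z(G) -> (c - e) * f k = S.
    move=> k /setDP[Ck nZk]; have Gk : k \in G by apply: (subsetP (CG_sub G h)).
    have E := Heq k Gk; rewrite (CG_key hC Hh Ck nZk) in E.
    by rewrite mulrBl E /c /S; ring.
  have ZC : 'Z(G) \subset C by apply: Z_sub_CG.
  have SD : S = Q + \sum_(k in C :\: 'Z(G)) f k.
    by rewrite /S (big_setID 'Z(G)) /= (setIidPr ZC).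
  have cm : #|C| = (#|'Z(G)| + #|C :\: 'Z(G)|)%N.
    rewrite cardsD (setIidPr ZC) subnKC //; exact: subset_leq_card.
  have E2 : (c - e) * S = (c - e) * Q + S *+ #|C :\: 'Z(G)|.
    rewrite {1}SD mulrDr mulr_sumr; congr (_ + _).
    transitivity (\sum_(k in C :\: 'Z(G)) S); last by rewrite sumr_const.
    by rewrite mulr_sumr; apply: eq_bigr => k Hk'; rewrite Hk.
  have Eh := Hk h; rewrite inE (CG_self Gh) andbT in Eh; case/setDP: Hh => _ nZh.
  have {}Eh := Eh nZh.
  have : (c - e) * ((z - e) * f h - Q) = 0.
    have -> : (c - e) * ((z - e) * f h - Q) = (z - e) * ((c - e) * f h) - (c - e) * Q by ring.
    rewrite Eh.
    have -> : (z - e) * S = (c - e) * S - S *+ #|C :\: 'Z(G)|.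
      by rewrite /c cm natrD -mulr_natl /z; ring.
    by rewrite E2; ring.
  move/eqP; rewrite mulf_eq0 => /orP[|/eqP H]; last by rewrite -(subrK Q ((z - e) * f h)) H add0r.
  by rewrite subr_eq0 eq_sym (negPf (ec h _)) // inE nZh Gh.
have E3 : (n - e) * Q = z * T.
  rewrite /Q mulr_sumr (eq_bigr (fun _ => T)); first by rewrite sumr_const mulr_natl.
  by move=> h Zh; rewrite HZ.
have GZ : 'Z(G) \subset G by apply: center_sub.
have nk : #|G| = (#|'Z(G)| + #|G :\: 'Z(G)|)%N.
  rewrite cardsD (setIidPr GZ) subnKC //; exact: subset_leq_card.
have E4 : (z - e) * T = (z - e) * Q + Q *+ #|G :\: 'Z(G)|.
  rewrite /T (big_setID 'Z(G)) /= (setIidPr GZ) -/Q mulrDr mulr_sumr; congr (_ + _).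
  transitivity (\sum_(k in G :\: 'Z(G)) Q); last by rewrite sumr_const.
  by rewrite mulr_sumr; apply: eq_bigr => k Hk'; rewrite HN.
have T0 : T = 0.
  have : e * T = 0.
    have -> : e * T = z * T - (z - e) * T by ring.
    rewrite E4 -E3 /n nk natrD -mulr_natl /z; ring.
  by move/eqP; rewrite mulf_eq0 (negPf e0) => /eqP.
have Q0 : Q = 0.
  move: E3; rewrite T0 mulr0 => /eqP; rewrite mulf_eq0 subr_eq0 eq_sym (negPf en).
  by move/eqP.
move=> h Gh; case: (boolP (h \in 'Z(G))) => [Zh|nZh].
  move: (HZ h Zh); rewrite T0 => /eqP; rewrite mulf_eq0 subr_eq0 eq_sym (negPf en).
  by move/eqP.
have Hh : h \in G :\: 'Z(G) by rewrite inE nZh Gh.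
move: (HN h Hh); rewrite Q0 => /eqP; rewrite mulf_eq0 subr_eq0 eq_sym (negPf ez).
by move/eqP.
Qed.

End Spec.

Section Mat.
Variables (gT : finGroupType) (G : {group gT}).
Local Open Scope ring_scope.

Lemma lap_entry i j : laplacian G i j =
  (i == j)%:R * #|'C_G[enum_val j]|%:R -
  ((enum_val i * enum_val j == enum_val j * enum_val i)%g)%:R.
Proof.
rewrite mxE /=; case: eqP => [->|nij].
  by rewrite eqxx mul1r /cdeg natrB //; apply/card_gt0P; exists (enum_val j);
    apply: CG_self; apply: enum_valP.
rewrite mul0r sub0r; case: ifP => _; rewrite ?mulr1n ?mulr0n ?oppr0 //.
Qed.

Lemma eig_eq (x : 'rV[algC]_#|G|) j : (x *m laplacian G) 0 j =
  #|'C_G[enum_val j]|%:R * x 0 j -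
  \sum_(i | (enum_val i * enum_val j == enum_val j * enum_val i)%g) x 0 i.
Proof.
rewrite mxE; under eq_bigr do rewrite lap_entry mulrBr.
rewrite sumrB (bigD1 j) //= eqxx mul1r big1 ?addr0; last first.
  by move=> i /negPf ->; rewrite mul0r mulr0.
rewrite mulrC; congr (_ - _); rewrite [RHS]big_mkcond; apply: eq_bigr => i _.
by case: ifP => _; rewrite ?mulr1n ?mulr0n ?mulr1 ?mulr0.
Qed.


Lemma eig_bound (hC : Con G) (e : algC) : eigenvalue (laplacian G) e ->
  e != 0 -> e != #|'Z(G)|%:R -> e != #|G|%:R ->
  (forall h, h \in G :\: 'Z(G) -> e != #|'C_G[h]|%:R) -> False.
Proof.
case/eigenvalueP => x Hx nx0 e0 ez en ec.
have G1 := group1 G.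
pose f g := x 0 (enum_rank_in G1 g).
have Hsum : forall P : pred gT,
    \sum_(i | P (enum_val i)) x 0 i = \sum_(g in G | P g) f g.
  by move=> P; rewrite big_enum_val_cond; apply: eq_bigr => i _; rewrite /f enum_valK_in.
have Heq : forall h, h \in G -> e * f h = #|'C_G[h]|%:R * f h - \sum_(g in 'C_G[h]) f g.
  move=> h Gh; set j := enum_rank_in G1 h.
  have : (x *m laplacian G) 0 j = (e *: x) 0 j by rewrite Hx.
  rewrite eig_eq mxE (enum_rankK_in G1 Gh) => <-.
  congr (_ - _); rewrite (Hsum (fun g => g * h == h * g)%g).
  by apply: eq_bigl => g; rewrite inCG.
have fz := spec_zero hC Heq e0 ez en ec.
case/eqP: nx0; apply/rowP => i; rewrite mxE -(enum_valK_in G1 i).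
by apply: fz; apply: enum_valP.
Qed.


Lemma eig_exists (hC : Con G) u b : u \in G :\: 'Z(G) -> b \in 'C_G[u] ->
  b \notin 'Z(G) -> b != u -> eigenvalue (laplacian G) #|'C_G[u]|%:R.
Proof.
move=> Hu Cb nZb nbu.
have Gu : u \in G by case/setDP: Hu.
have Gb : b \in G by move: Cb; rewrite inCG => /andP[].
have Ecb := CG_key hC Hu Cb nZb.
have G1 := group1 G.
set iu := enum_rank_in G1 u; set ib := enum_rank_in G1 b.
have eu : enum_val iu = u by apply: enum_rankK_in.
have eb : enum_val ib = b by apply: enum_rankK_in.
have nib : (ib == iu) = false.
  by apply/negbTE; apply: contra nbu => /eqP E; rewrite -eu -eb E.
set w : algC := #|'C_G[u]|%:R.
apply/eigenvalueP; exists (delta_mx 0 iu - delta_mx 0 ib).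
  apply/rowP => j; rewrite mulmxBl -!rowE.
  have -> : (row iu (laplacian G) - row ib (laplacian G)) 0 j =
     laplacian G iu j - laplacian G ib j by rewrite !mxE.
  have -> : (w *: (delta_mx 0 iu - delta_mx 0 ib : 'rV_#|G|)) 0 j =
     w * ((j == iu)%:R - (j == ib)%:R)  by rewrite !mxE /=.
  rewrite !lap_entry.
  have t1 : true%:R = 1 :> algC by [].
  have f0 : false%:R = 0 :> algC by [].
  case: (eqVneq j iu) => [->|nju].
    rewrite nib (eq_sym iu) nib eu eb eqxx t1 f0.
    have -> : (b * u == u * b)%g by move: Cb; rewrite inCG => /andP[].
    rewrite t1 /w; ring.
  case: (eqVneq j ib) => [->|njb].
    rewrite eu eb eqxx Ecb.
    have -> : (u * b == b * u)%g by move: Cb; rewrite inCG => /andP[_ /eqP ->].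
    rewrite t1 f0 /w; ring.
  rewrite eu eb f0 !mul0r subrr mulr0.
  have Gj : enum_val j \in G by apply: enum_valP.
  have Hc : (u * enum_val j == enum_val j * u)%g = (b * enum_val j == enum_val j * b)%g.
    have : (enum_val j \in 'C_G[u]) = (enum_val j \in 'C_G[b]) by rewrite Ecb.
    by rewrite !inCG Gj /= (eq_sym (enum_val j * u)%g) (eq_sym (enum_val j * b)%g).
  rewrite Hc; ring.
apply/negP => /eqP /rowP /(_ iu); rewrite !mxE eqxx (eq_sym iu) nib /=.
by move/eqP; rewrite subr0 eqxx pnatr_eq0.
Qed.

End Mat.

Local Open Scope ring_scope.

Theorem proposition3p1 (gT : finGroupType) (G : {group gT}) :
  ~~ abelian G -> Con G ->
  [/\ clique_number G = (\max_(u in G :\: 'Z(G)) #|'C_G[u]|)%N,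
      'Z(G) \proper CGset G ->
        [/\ eigenvalue (laplacian G) (clique_number G)%:R,
            (clique_number G < #|G|)%N &
            forall e : algC, eigenvalue (laplacian G) e ->
              e < #|G|%:R -> e <= (clique_number G)%:R]
    & CGset G = 'Z(G) -> clique_number G = (#|'Z(G)| + 1)%N].
Proof.
move=> nab hC; have CE := clique_eq nab hC.
have [u0 Hu0] := noncentral_ex nab.
have Gu0 : u0 \in G by case/setDP: Hu0.
split; first exact: CE.
  move=> /properP[_ [v Cv nZv]].
  move: Cv; rewrite /CGset inE /cdeg => /andP[Gv zv].
  have Hv : v \in G :\: 'Z(G) by rewrite inE nZv Gv.
  have Hpos : (0 < #|G :\: 'Z(G)|)%N by apply/card_gt0P; exists v.
  have [u Hu Mu] := eq_bigmax_cond (fun u => #|'C_G[u]|) Hpos.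
  have Gu : u \in G by case/setDP: Hu.
  have vu : (#|'C_G[v]| <= #|'C_G[u]|)%N by rewrite -Mu; exact: leq_bigmax_cond.
  have : ~~ ('C_G[u] \subset u |: 'Z(G)).
    apply/negP => /subset_leq_card; rewrite cardsU1.
    move: zv vu; case: (u \in 'Z(G)) => /=; move: #|'C_G[v]| #|'C_G[u]| #|'Z(G)| => a b c; lia.
  case/subsetPn => b Cb; rewrite in_setU1 negb_or => /andP[nbu nZb].
  rewrite CE Mu; split.
  - exact: (eig_exists hC Hu Cb nZb nbu).
  - exact: proper_card (CG_proper Hu).
  - move=> e He elt.
    case: (boolP (e == 0)) => [/eqP->|e0]; first by rewrite ler0n.
    case: (boolP (e == #|'Z(G)|%:R)) => [/eqP->|ez].
      by rewrite ler_nat; apply: subset_leq_card; apply: Z_sub_CG.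
    case: (boolP (e == #|G|%:R)) => [/eqP E|en]; first by rewrite E ltxx in elt.
    case: (boolP [exists h in G :\: 'Z(G), e == #|'C_G[h]|%:R]).
      move=> /existsP[h /andP[Hh /eqP->]].
      by rewrite ler_nat -Mu; apply: leq_bigmax_cond.
    rewrite negb_exists => /forallP Hall; exfalso.
    apply: (eig_bound hC He e0 ez en) => h Hh.
    by move: (Hall h); rewrite Hh.
move=> HCZ; rewrite CE; apply/eqP; rewrite eqn_leq; apply/andP; split.
  apply/bigmax_leqP => u Hu.
  have : u \notin CGset G by rewrite HCZ; case/setDP: Hu.
  have Gu : u \in G by case/setDP: Hu.
  rewrite /CGset inE Gu /cdeg /= -leqNgt; move: #|'C_G[u]| #|'Z(G)| => a b; lia.
apply: (leq_trans _ (leq_bigmax_cond u0 Hu0)); rewrite addn1.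
apply: proper_card; apply/properP; split; first exact: Z_sub_CG.
by exists u0; [apply: CG_self | case/setDP: Hu0].
Qed.
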